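(* Let $G$ be a connected graph. (a) $O_{\rm SR}(G)=\mathcal{M}$ if and only if $G_{\rm SR}\cong xK_2$ for some positive integer $x$. (b) Let $H\in\{C_3,P_3,P_4,P_5\}$. If $G_{\rm SR}\cong H\cup xK_2$ (disjoint union) for some integer $x\ge 0$, then $O_{\rm SR}(G)=\mathcal{N}$. (c) Let $H^*\in\{K_m, C_m, P_{m+2}, xC_3\cup yP_3\}$, where $m\ge 4$ and $x+y\ge 2$. If $G_{\rm SR}$ contains $H^*$ as a subgraph, then $O_{\rm SR}(G)=\mathcal{B}$.
   Context: All graphs are finite, simple and undirected; $d(x,y)$ is the shortest-path distance. $P_n,C_n,K_n$ denote path, cycle and complete graph on $n$ vertices; $xK_2$ is the disjoint union of $x$ copies of $K_2$ and $\cup$ denotes disjoint union. A set $S\subseteq V(G)$ is a strong resolving set of a connected graph $G$ if for all distinct $x,y\in V(G)$ there exists $z\in S$ such that $x$ lies on a $y$–$z$ geodesic or $y$ lies on an $x$–$z$ geodesic. A vertex $u$ is maximally distant from $v$ if $d(u,v)\ge d(w,v)$ for every neighbor $w$ of $u$; $u,v$ are mutually maximally distant (MMD) if each is maximally distant from the other. The strong resolving graph $G_{\rm SR}$ has vertex set $\{x: x\text{ is MMD with some }y\}$ and edges exactly the MMD pairs. The Maker–Breaker strong resolving game on $G$: Maker and Breaker alternately select a not-yet-chosen vertex of $G$; Maker wins if the vertices he selects contain a strong resolving set of $G$, Breaker wins otherwise. In the M-game Maker moves first, in the B-game Breaker moves first. $O_{\rm SR}(G)=\mathcal{M}$ if Maker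 has a winning strategy in both games, $\mathcal{B}$ if Breaker has a winning strategy in both, and $\mathcal{N}$ if the first player has a winning strategy in each. *)

(* Defs.v *)
From mathcomp Require Import all_boot.
Set Implicit Arguments. Unset Strict Implicit. Unset Printing Implicit Defensive.

Section Graphs.
Variable T : finType.
Variable e : rel T.

Definition simple_graph := symmetric e /\ irreflexive e.
Definition connected_graph := forall x y : T, connect e x y.

Fixpoint ball (k : nat) (x : T) : {set T} :=
  match k with
  | 0 => [set x]
  | k'.+1 => ball k' x :|: [set w | [exists u in ball k' x, e u w]]
  end.

(* shortest-path distance (meaningful for connected graphs; #|T| otherwise) *)
Definition dist (x y : T) : nat := find (fun k => y \in ball k x) (iota 0 #|T|).

Definition on_geodesic (y x z : T) : bool := dist y x + dist x z == dist y z.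

Definition strong_resolving (S : {set T}) : bool :=
  [forall x, forall y, (x != y) ==>
     [exists z in S, on_geodesic y x z || on_geodesic x y z]].

Definition max_distant (u v : T) : bool :=
  [forall w, e u w ==> (dist w v <= dist u v)].

Definition MMD (u v : T) : bool := [&& u != v, max_distant u v & max_distant v u].

(* the strong resolving graph G_SR: vertex set V_SR, edge relation MMD *)
Definition V_SR : {set T} := [set x | [exists y, MMD x y]].

(* Maker-Breaker strong resolving game. M = Maker's vertices, B = Breaker's.
   win k maker_turn M B : Maker (can force a) win from this position. *)
Definition maker_goal (M : {set T}) : bool :=
  [exists S : {set T}, (S \subset M) && strong_resolving S].

Fixpoint maker_wins (k : nat) (maker_turn : bool) (M B : {set T}) : bool :=
  let F := ~: (M :|: B) in
  match k with
  | 0 => maker_goal M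
  | k'.+1 =>
    if F == set0 then maker_goal M
    else if maker_turn then [exists v in F, maker_wins k' false (v |: M) B]
    else [forall v in F, maker_wins k' true M (v |: B)]
  end.

Definition maker_wins_M_game : bool := maker_wins #|T| true set0 set0.
Definition maker_wins_B_game : bool := maker_wins #|T| false set0 set0.
End Graphs.

Inductive outcome := Outcome_M | Outcome_B | Outcome_N | Outcome_P.

(* the game is finite and determined: Breaker wins iff Maker does not *)
Definition O_SR (T : finType) (e : rel T) : outcome :=
  match maker_wins_M_game e, maker_wins_B_game e with
  | true, true => Outcome_M
  | false, false => Outcome_B
  | true, false => Outcome_N
  | false, true => Outcome_P
  end.

Definition path_rel (n : nat) : rel 'I_n :=
  fun i j => (i.+1 == j :> nat) || (j.+1 == i :> nat).
Definition cycle_rel (n : nat) : rel 'I_n :=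
  fun i j => path_rel i j ||
    ((i == 0 :> nat) && (j == n.-1 :> nat)) || ((j == 0 :> nat) && (i == n.-1 :> nat)).
Definition complete_rel (n : nat) : rel 'I_n := fun i j => i != j.
Definition matching_rel (x : nat) : rel ('I_x * bool) :=
  fun a b => (a.1 == b.1) && (a.2 != b.2).
Definition union_rel (A B : finType) (f : rel A) (g : rel B) : rel (A + B) :=
  fun a b => match a, b with
             | inl a', inl b' => f a' b'
             | inr a', inr b' => g a' b'
             | _, _ => false
             end.
Definition copies_rel (x : nat) (U : finType) (f : rel U) : rel ('I_x * U) :=
  fun a b => (a.1 == b.1) && f a.2 b.2.

Definition iso_to (T : finType) (V : {set T}) (e : rel T) (U : finType) (f : rel U) : Prop :=
  exists h : U -> T, [/\ injective h, forall t, t \in V <-> exists u, h u = t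
                      & forall a b, f a b = e (h a) (h b)].

Definition contains_subgraph (T : finType) (V : {set T}) (e : rel T) (U : finType) (f : rel U) : Prop :=
  exists h : U -> T, [/\ injective h, forall u, h u \in V
                      & forall a b, f a b -> e (h a) (h b)].

Arguments path_rel n : clear implicits.
Arguments cycle_rel n : clear implicits.
Arguments complete_rel n : clear implicits.
Arguments matching_rel x : clear implicits.
Arguments copies_rel x {U} f.

(* Main.v *)
Require Import Defs.
From mathcomp Require Import all_boot zify.
Set Implicit Arguments. Unset Strict Implicit. Unset Printing Implicit Defensive.

Section Dist.
Variable T : finType.
Variable e : rel T.
Hypothesis esym : symmetric e.
Hypothesis eirr : irreflexive e.
Hypothesis econ : connected_graph e.

Lemma ballS k x y : (y \in ball e k.+1 x) = (y \in ball e k x) || [exists u in ball e k x, e u y].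
Proof. by rewrite /= !inE. Qed.

Lemma ball_mono i j x : i <= j -> ball e i x \subset ball e j x.
Proof.
move=> /subnK <-; elim: (j - i) => [|d IH] //=.
by apply: subset_trans IH _; rewrite subsetUl.
Qed.

Lemma ball_comp i j x y z : y \in ball e i x -> z \in ball e j y -> z \in ball e (i + j) x.
Proof.
move=> Hy; elim: j z => [|j IH] z; first by rewrite addn0 /= inE => /eqP ->.
rewrite ballS addnS ballS => /orP[/IH -> //|/existsP[u /andP[Hu Huz]]].
by apply/orP; right; apply/existsP; exists u; rewrite IH.
Qed.

Lemma ball1 u y : e u y -> y \in ball e 1 u.
Proof. by move=> H; rewrite ballS; apply/orP; right; apply/existsP; exists u; rewrite /= inE eqxx. Qed.

Lemma ball_sym k x y : y \in ball e k x -> x \in ball e k y.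
Proof.
elim: k y => [|k IH] y; first by rewrite /= !inE eq_sym.
rewrite ballS => /orP[/IH H|/existsP[u /andP[Hu Huy]]].
  by apply: (subsetP (ball_mono _ _)) H.
have := ball_comp (ball1 (y:=u) _) (IH _ Hu); rewrite add1n; apply.
by rewrite esym.
Qed.

Lemma path_ball x p : path e x p -> last x p \in ball e (size p) x.
Proof.
elim: p x => [|a p IH] x /=; first by rewrite inE.
move=> /andP[Hxa Hp]; have := ball_comp (ball1 Hxa) (IH _ Hp); by rewrite add1n.
Qed.

Lemma ball_full x y : y \in ball e #|T|.-1 x.
Proof.
have /connectP[p Hp ->] := econ x y.
case/shortenP: Hp => p' Hp' Hu _.
have Hs : size p' <= #|T|.-1.
  have := card_uniqP Hu; rewrite /= => Hc.
  have := max_card (mem (x :: p')); rewrite Hc /=; lia.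
by apply: (subsetP (ball_mono _ Hs)); apply: path_ball.
Qed.

Lemma dist_lt x y : dist e x y < #|T|.
Proof.
have Hn : 0 < #|T| by apply/card_gt0P; exists x.
have : has (fun k => y \in ball e k x) (iota 0 #|T|).
  apply/hasP; exists #|T|.-1; last exact: ball_full.
  by rewrite mem_iota; lia.
by rewrite has_find size_iota.
Qed.

Lemma distP x y k : (dist e x y <= k) = (y \in ball e k x).
Proof.
have Hlt := dist_lt x y.
apply/idP/idP => H.
  have Hh : has (fun k => y \in ball e k x) (iota 0 #|T|) by rewrite has_find size_iota.
  have := nth_find 0 Hh; rewrite -/(dist e x y) nth_iota // add0n => Hb.
  by apply: (subsetP (ball_mono _ H)).
case: (leqP (dist e x y) k) => // Hk; case: (ltnP k #|T|) => Hkn.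
  have := before_find 0 Hk; rewrite nth_iota // add0n => Hf.
  by rewrite /= Hf in H.
lia.
Qed.

Lemma dist_sym x y : dist e x y = dist e y x.
Proof.
apply/eqP; rewrite eqn_leq !distP; apply/andP; split; apply: ball_sym; by rewrite -distP.
Qed.

Lemma dist_tri x y z : dist e x z <= dist e x y + dist e y z.
Proof. by rewrite distP; apply: ball_comp; rewrite -distP. Qed.

Lemma dist0 x y : (dist e x y == 0) = (x == y).
Proof.
by rewrite -leqn0 distP /= inE eq_sym.
Qed.

Lemma distxx x : dist e x x = 0.
Proof. by apply/eqP; rewrite dist0. Qed.

Lemma dist_edge u w x : e u w -> dist e x w <= (dist e x u).+1.
Proof.
move=> H; rewrite distP ballS; apply/orP; right; apply/existsP; exists u.
by rewrite -distP leqnn.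
Qed.

Lemma dist_step x z : x != z -> exists2 w, e x w & (dist e w z).+1 = dist e x z.
Proof.
move=> Hxz; have Hd : 0 < dist e z x by rewrite lt0n dist0 eq_sym.
case Ed: (dist e z x) Hd => [|d] // _.
move: (leqnn d.+1); rewrite -{1}Ed distP ballS.
case/orP=> [|/existsP[u /andP[Hu Hux]]].
  by rewrite -distP; lia.
exists u; first by rewrite esym.
have := dist_edge z Hux; rewrite -distP in Hu; rewrite (dist_sym u z) (dist_sym x z); lia.
Qed.


Definition cover (S : {set T}) := forall u v, MMD e u v -> (u \in S) || (v \in S).

Lemma not_geo u v z : on_geodesic e v u z -> z != u -> max_distant e u v -> False.
Proof.
move=> /eqP Hg Hzu /forallP Hm.
have Hne : u != z by rewrite eq_sym.
have [w Huw Hw] := dist_step Hne.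
have := Hm w; rewrite Huw /= => Hle.
have := dist_tri v w z; rewrite (dist_sym w v) (dist_sym u v) in Hle; lia.
Qed.

Lemma SR_cover S : strong_resolving e S -> cover S.
Proof.
move=> /forallP HS u v /and3P[Huv Hu Hv].
case: (boolP (u \in S)) => //= HuS; apply/negPn/negP => HvS.
have /forallP/(_ v) := HS u; rewrite Huv /= => /existsP[z /andP[Hz /orP[H|H]]].
  by apply: (not_geo H) => //; apply: contraNneq HuS => <-.
by apply: (not_geo H) => //; apply: contraNneq HvS => <-.
Qed.

Lemma far a b : exists c, on_geodesic e a b c && max_distant e c a.
Proof.
have Hb : on_geodesic e a b b by rewrite /on_geodesic distxx addn0.
case: (arg_maxnP (fun c => dist e a c) Hb) => c Hc Hmax.
exists c; rewrite Hc /=; apply/forallP => w; apply/implyP => Hcw.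
rewrite leqNgt; apply/negP => Hlt.
have Hw : on_geodesic e a b w.
  move: Hc; rewrite /on_geodesic => /eqP Hc.
  have := dist_edge b Hcw; have := dist_tri a b w.
  rewrite (dist_sym w a) (dist_sym c a) in Hlt; move=> h1 h2; apply/eqP; lia.
have := Hmax _ Hw; rewrite (dist_sym w a) (dist_sym c a) in Hlt; lia.
Qed.

Lemma mmd_exists x y : x != y -> exists u v, [/\ MMD e u v, on_geodesic e y x u
   & on_geodesic e x y v].
Proof.
move=> Hxy.
have [u /andP[Hu Hmu]] := far y x.
have [v /andP[Hv Hmv]] := far u y.
move: Hu Hv; rewrite /on_geodesic => /eqP Hu /eqP Hv.
have Hd : 0 < dist e x y by rewrite lt0n dist0.
have Ht1 := dist_tri u x v; have Ht2 := dist_tri x y v.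
exists u, v; split; last first.
- apply/eqP; rewrite (dist_sym u x) (dist_sym y x) (dist_sym u y) in Hu Ht1 Hv Ht2 *; lia.
- by apply/eqP.
apply/and3P; split => //.
- apply/negP => /eqP Huv; subst v; rewrite distxx in Hv.
  rewrite (dist_sym y x) in Hu; lia.
apply/forallP => w; apply/implyP => Huw; rewrite leqNgt; apply/negP => Hlt.
move/forallP: Hmu => /(_ w); rewrite Huw /= => Hle.
have := dist_tri w y v; lia.
Qed.

Lemma cover_SR S : cover S -> strong_resolving e S.
Proof.
move=> HS; apply/forallP => x; apply/forallP => y; apply/implyP => Hxy.
have [u [v [Huv Hu Hv]]] := mmd_exists Hxy.
case/orP: (HS _ _ Huv) => H; apply/existsP.
  by exists u; rewrite H Hu.
by exists v; rewrite H Hv orbT.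
Qed.

Lemma goal_cover M : maker_goal e M = [forall u, forall v, MMD e u v ==> (u \in M) || (v \in M)].
Proof.
apply/existsP/forallP.
  case=> S /andP[HSM /SR_cover HS] u; apply/forallP => v; apply/implyP => /HS /orP[] H.
    by rewrite (subsetP HSM _ H).
  by rewrite (subsetP HSM _ H) orbT.
move=> H; exists M; rewrite subxx /=; apply: cover_SR => u v Huv.
by move/forallP: (H u) => /(_ v); rewrite Huv.
Qed.


Lemma MMD_sym u v : MMD e u v = MMD e v u.
Proof. by rewrite /MMD eq_sym; case: (v != u) => //=; rewrite andbC. Qed.

Lemma MMD_irr u : MMD e u u = false.
Proof. by rewrite /MMD eqxx. Qed.

Lemma FU (M B : {set T}) v : ~: ((v |: M) :|: B) = ~: (M :|: B) :\ v.
Proof. by apply/setP => z; rewrite !inE; case: (z == v); rewrite ?orbT ?andbF. Qed.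
Lemma FU' (M B : {set T}) v : ~: (M :|: (v |: B)) = ~: (M :|: B) :\ v.
Proof. by apply/setP => z; rewrite !inE; case: (z == v); rewrite ?orbT ?andbF. Qed.

Lemma lost k t (M B : {set T}) a b : MMD e a b -> a \in B -> b \in B -> a \notin M -> b \notin M ->
  ~~ maker_wins e k t M B.
Proof.
move=> Hab.
elim: k t M B => [|k IH] t M B HaB HbB HaM HbM.
  rewrite /= goal_cover; apply/negP => /forallP/(_ a)/forallP/(_ b).
  by rewrite Hab (negbTE HaM) (negbTE HbM).
rewrite /=; case: ifP => HF.
  rewrite goal_cover; apply/negP => /forallP/(_ a)/forallP/(_ b).
  by rewrite Hab (negbTE HaM) (negbTE HbM).
case: t.
  apply/negP => /existsP[v /andP[Hv]]; apply/negP; apply: IH => //; rewrite !inE in Hv *;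
   rewrite negb_or ?HaM ?HbM andbT; apply/eqP => E; move: Hv; by rewrite -E ?HaB ?HbB orbT.
have [v Hv] : exists v, v \in ~: (M :|: B) by apply/set0Pn; rewrite HF.
apply/negP => /forallP/(_ v); rewrite Hv /=; apply/negP; apply: IH => //.
  by rewrite inE HaB orbT.
by rewrite inE HbB orbT.
Qed.

Lemma BW k (M B : {set T}) a b c : MMD e a b -> MMD e a c -> b != c ->
  a \notin M :|: B -> b \notin M :|: B -> c \notin M :|: B ->
  ~~ maker_wins e k.+3 false M B.
Proof.
move=> Hab Hac Hbc Ha Hb Hc.
have Hab' : a != b by move: Hab => /and3P[].
have Hac' : a != c by move: Hac => /and3P[].
have HaF : a \in ~: (M :|: B) by rewrite in_setC.
rewrite /=; have -> : (~: (M :|: B) == set0) = false by apply/negbTE/set0Pn; exists a.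
apply/negP => /forallP/(_ a); rewrite HaF /=.
have HbF : b \in ~: (M :|: (a |: B)).
  by move: Hb; rewrite !inE !negb_or eq_sym Hab'.
have -> : (~: (M :|: (a |: B)) == set0) = false by apply/negbTE/set0Pn; exists b.
move=> /existsP[v /andP[Hv]]; apply/negP.
move: Hv; rewrite !inE !negb_or => /andP[HvM /andP[Hva HvB]].
have [d [Hd Hdv Hdn]] : exists d, [/\ MMD e a d, d != v & d \notin M :|: B].
  case: (eqVneq b v) => [Hbv|Hbv]; [exists c; split => //; by rewrite -Hbv eq_sym | by exists b; split].
have Had : a != d by move: Hd => /and3P[].
have HdF : d \in ~: ((v |: M) :|: (a |: B)).
  by move: Hdn; rewrite !inE !negb_or (eq_sym d a) Had Hdv /=.
rewrite /=; have -> : (~: ((v |: M) :|: (a |: B)) == set0) = false by apply/negbTE/set0Pn; exists d.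
apply/negP => /forallP/(_ d); rewrite HdF /=; apply/negP; apply: (@lost k true (v |: M) (d |: (a |: B)) a d Hd).
- by rewrite !inE eqxx orbT.
- by rewrite !inE eqxx.
- move: Ha; rewrite !inE !negb_or => /andP[-> _]; by rewrite andbT eq_sym.
- by move: HdF; rewrite !inE !negb_or => /andP[].
Qed.

Definition Inv (M B : {set T}) := forall u v, MMD e u v ->
  [|| u \in M, v \in M | [&& u \notin B, v \notin B & [forall w, MMD e u w ==> (w \in M) || (w == v)]]].

Lemma Inv_M (M B : {set T}) x : Inv M B -> Inv (x |: M) B.
Proof.
move=> H u v /H; rewrite !inE.
case/or3P => [->|->|/and3P[-> -> /forallP Hw]]; rewrite ?orbT //.
rewrite /= !orbA; apply/orP; right; apply/forallP => w; apply/implyP => /(implyP (Hw w)).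
by rewrite inE; case/orP => ->; rewrite ?orbT.
Qed.

Lemma Inv_goal (M B : {set T}) : Inv M B -> ~: (M :|: B) = set0 -> maker_goal e M.
Proof.
move=> H HF; rewrite goal_cover; apply/forallP => u; apply/forallP => v; apply/implyP => /H.
case/or3P => [->|->|/and3P[Hu Hv _]] //; rewrite ?orbT //.
case: (boolP (u \in M)) => // HuM.
have : u \in ~: (M :|: B) by rewrite !inE negb_or HuM.
by rewrite HF inE.
Qed.

Lemma MW k (M B : {set T}) : Inv M B -> #|~: (M :|: B)| <= k ->
  maker_wins e k true M B && maker_wins e k false M B.
Proof.
elim/ltn_ind: k M B => k IH M B HI Hk.
case: k IH Hk => [|k] IH Hk.
  have HF : ~: (M :|: B) = set0 by apply/eqP; rewrite -cards_eq0; lia.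
  by rewrite /= (Inv_goal HI HF).
rewrite /=; case: ifP => HF.
  by rewrite (Inv_goal HI (eqP HF)).
have [v0 Hv0] : exists v, v \in ~: (M :|: B) by apply/set0Pn; rewrite HF.
apply/andP; split.
  apply/existsP; exists v0; rewrite Hv0 /=.
  have := IH k (ltnSn k) (v0 |: M) B (Inv_M v0 HI).
  by rewrite FU (cardsD1 v0) Hv0 in Hk *; move=> /(_ Hk) /andP[].
apply/forallP => v; apply/implyP => Hv.
case: (boolP [exists w, [&& MMD e v w, v \notin M & w \notin M]]).
  case/existsP => w /and3P[Hvw HvM HwM].
  have := HI v w Hvw; rewrite (negbTE HvM) (negbTE HwM) /= => /and3P[HvB HwB /forallP Hiso].
  have Hwv : w != v by move: Hvw; rewrite MMD_sym => /and3P[].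
  have HwF : w \in ~: (M :|: (v |: B)) by rewrite !inE !negb_or HwM Hwv HwB.
  have Hc2 : 1 < #|~: (M :|: B)|.
    rewrite (cardsD1 v) Hv -FU' (cardsD1 w) HwF; lia.
  case: k IH Hk => [|k] IH Hk; first lia.
  rewrite /=; have -> : (~: (M :|: (v |: B)) == set0) = false by apply/negbTE/set0Pn; exists w.
  apply/existsP; exists w; rewrite HwF /=.
  have HI' : Inv (w |: M) (v |: B).
    move=> a b Hab; rewrite !inE.
    case: (boolP (a == w)) => //= Haw; case: (boolP (a \in M)) => //= HaM.
    case: (boolP (b == w)) => //= Hbw; case: (boolP (b \in M)) => //= HbM.
    have := HI a b Hab; rewrite (negbTE HaM) (negbTE HbM) /= => /and3P[HaB HbB /forallP Hiso'].
    have Hav : a != v.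
      apply/eqP => E; subst a; have := Hiso b; rewrite Hab /= (negbTE HbM) /=.
      by rewrite (negbTE Hbw).
    have Hbv : b != v.
      apply/eqP => E; subst b; have := Hiso a; rewrite MMD_sym Hab /= (negbTE HaM) /=.
      by rewrite (negbTE Haw).
    rewrite (negbTE Hav) (negbTE Hbv) (negbTE HaB) (negbTE HbB) /=; apply/forallP => z; apply/implyP => /(implyP (Hiso' z)).
    by rewrite inE; case/orP => ->; rewrite ?orbT.
  have := IH k (ltnW (ltnSn k.+1)) (w |: M) (v |: B) HI'.
  have Hc : #|~: ((w |: M) :|: (v |: B))| <= k.
    move: Hk; rewrite FU (cardsD1 v (~: (M :|: B))) Hv -FU' (cardsD1 w) HwF; lia.
  by move/(_ Hc)/andP=> [].
move=> Hno.
have HvM : v \notin M by move: Hv; rewrite !inE negb_or => /andP[].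
have HI' : Inv M (v |: B).
  move=> a b Hab; case: (boolP (a \in M)) => //= HaM; case: (boolP (b \in M)) => //= HbM.
  have := HI a b Hab; rewrite (negbTE HaM) (negbTE HbM) /= => /and3P[HaB HbB ->].
  rewrite !inE andbT !negb_or HaB HbB !andbT.
  apply/andP; split; apply/eqP => E; subst; move/existsP: Hno; apply.
    by exists b; rewrite Hab HaM HbM.
  by exists a; rewrite MMD_sym Hab HaM HbM.
have Hc : #|~: (M :|: (v |: B))| <= k.
  by move: Hk; rewrite FU' (cardsD1 v (~: (M :|: B))) Hv; lia.
by have /andP[] := IH k (ltnSn k) M (v |: B) HI' Hc.
Qed.

Lemma card3 (a b c : T) : a != b -> a != c -> b != c -> 3 <= #|T|.
Proof.
move=> Hab Hac Hbc.
have Hu : uniq [:: a; b; c] by rewrite /= !inE negb_or Hab Hac Hbc.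
by have := max_card (mem [:: a; b; c]); rewrite (card_uniqP Hu).
Qed.

Lemma card4 (a b c d : T) : a != b -> a != c -> b != c -> d \notin [:: a; b; c] -> 4 <= #|T|.
Proof.
move=> Hab Hac Hbc Hd.
have Hu : uniq [:: d; a; b; c] by rewrite /= Hd !inE negb_or Hab Hac Hbc.
by have := max_card (mem [:: d; a; b; c]); rewrite (card_uniqP Hu).
Qed.

Lemma MMD_neq u v : MMD e u v -> u != v.
Proof. by case/and3P. Qed.

Lemma breakerB : (exists a b c, [/\ MMD e a b, MMD e a c & b != c]) -> ~~ maker_wins_B_game e.
Proof.
case=> a [b [c [Hab Hac Hbc]]].
have := card3 (MMD_neq Hab) (MMD_neq Hac) Hbc; rewrite /maker_wins_B_game.
case: #|T| => [|[|[|n]]] // _.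
by apply: (@BW n set0 set0 a b c Hab Hac Hbc); rewrite setU0 inE.
Qed.

Lemma mwS k t (M B : {set T}) : maker_wins e k.+1 t M B =
  if ~: (M :|: B) == set0 then maker_goal e M
  else if t then [exists v in ~: (M :|: B), maker_wins e k false (v |: M) B]
  else [forall v in ~: (M :|: B), maker_wins e k true M (v |: B)].
Proof. by []. Qed.

Lemma breakerM (v0 : T) : (forall v, exists a b c, [/\ MMD e a b, MMD e a c, b != c & v \notin [:: a; b; c]]) ->
   ~~ maker_wins_M_game e.
Proof.
move=> H; have [a [b [c [Hab Hac Hbc Hv]]]] := H v0.
have := card4 (MMD_neq Hab) (MMD_neq Hac) Hbc Hv; rewrite /maker_wins_M_game.
case: #|T| => [|[|[|[|n]]]] // _.
rewrite mwS; case: ifP => _.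
  rewrite goal_cover; apply/negP => /forallP/(_ a)/forallP/(_ b); by rewrite Hab !inE.
apply/negP => /existsP[v /andP[_]]; apply/negP.
have [a' [b' [c' [Hab' Hac' Hbc' Hv']]]] := H v.
move: Hv'; rewrite !inE !negb_or => /and3P[H1 H2 H3].
by apply: (@BW n (v |: set0) set0 a' b' c' Hab' Hac' Hbc'); rewrite !inE !orbF eq_sym.
Qed.

Lemma makerBoth : Inv set0 set0 -> maker_wins_M_game e && maker_wins_B_game e.
Proof.
move=> HI; have := MW HI (leq_trans (max_card _) (leqnn #|T|)).
by rewrite /maker_wins_M_game /maker_wins_B_game.
Qed.

Lemma makerM c : 2 <= #|T| -> Inv [set c] set0 -> maker_wins_M_game e.
Proof.
move=> H2 HI; rewrite /maker_wins_M_game.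
have Hc : #|~: ([set c] :|: set0)| <= #|T|.-1.
  by have := cardsC [set c]; rewrite setU0 cards1; lia.
case E: #|T| H2 Hc => [|n] // _ Hc.
rewrite mwS; case: ifP => HF.
  by move/eqP: HF; have := cardsC (set0 : {set T}); rewrite cards0 setU0 E => H0 HF; rewrite HF cards0 in H0.
apply/existsP; exists c; rewrite !inE /=.
have E' : c |: set0 = [set c] by rewrite setU0.
by rewrite E'; have /andP[] := MW HI Hc.
Qed.


Lemma VSR_l u v : MMD e u v -> u \in V_SR e.
Proof. by move=> H; rewrite inE; apply/existsP; exists v. Qed.
Lemma VSR_r u v : MMD e u v -> v \in V_SR e.
Proof. by rewrite MMD_sym; apply: VSR_l. Qed.

Lemma some_mmd : 2 <= #|T| -> exists u v, MMD e u v.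
Proof.
case/card_gt1P => x [y [_ _ Hxy]].
by have [u [v [H _ _]]] := mmd_exists Hxy; exists u, v.
Qed.

Lemma matching_iso : 2 <= #|T| ->
  (forall a b c, MMD e a b -> MMD e a c -> b = c) ->
  exists x, 0 < x /\ iso_to (V_SR e) (MMD e) (matching_rel x).
Proof.
move=> H2 Hu.
pose p u := odflt u [pick w | MMD e u w].
have pP u w : MMD e u w -> p u = w.
  move=> Huw; rewrite /p; case: pickP => [w' Hw'|H] /=; first exact: (Hu _ _ _ Hw' Huw).
  by rewrite H in Huw.
have pM u w : MMD e u w -> MMD e u (p u) by move=> H; rewrite (pP _ _ H).
have ppK u w : MMD e u w -> p (p u) = u.
  by move=> H; apply: (pP); rewrite MMD_sym (pP _ _ H).
pose L := [set u | MMD e u (p u) && (enum_rank u < enum_rank (p u))].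
have pL u : u \in L -> p u \notin L.
  rewrite !inE => /andP[Hm Hr]; rewrite (ppK _ _ Hm); apply/negP => /andP[_]; lia.
have LM u : u \in L -> MMD e u (p u) by rewrite inE => /andP[].
pose h (ab : 'I_#|L| * bool) := if ab.2 then p (enum_val ab.1) else enum_val ab.1.
have cover t : t \in V_SR e -> t \in L \/ p t \in L.
  rewrite inE => /existsP[y Hy]; have Hm := pM _ _ Hy.
  have Hne : enum_rank t != enum_rank (p t).
    by apply/negP => /eqP /enum_rank_inj E; rewrite -E MMD_irr in Hm.
  case: (ltngtP (enum_rank t) (enum_rank (p t))) => Hr.
  - by left; rewrite inE Hm Hr.
  - right; rewrite inE (ppK _ _ Hm); rewrite MMD_sym (pP _ _ Hy) in Hm.
    by rewrite (pP _ _ Hy) in Hr *; rewrite Hm Hr.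
  - by move/val_inj: Hr => Hr; rewrite Hr eqxx in Hne.
have [u0 [v0 H0]] := some_mmd H2.
exists #|L|; split.
  rewrite card_gt0; apply/set0Pn.
  by case: (cover u0 (VSR_l H0)) => H; [exists u0 | exists (p u0)].
exists h; split.
- move=> [i b] [j c]; rewrite /h /=.
  have Li := enum_valP i; have Lj := enum_valP j.
  case: b; case: c => E.
  + by have := ppK _ _ (LM _ Li); rewrite E (ppK _ _ (LM _ Lj)) => /enum_val_inj ->.
  + by have := pL _ Li; rewrite E Lj.
  + by have := pL _ Lj; rewrite -E Li.
  + by rewrite (enum_val_inj E).
- move=> t; split.
    move=> Ht; case: (cover t Ht) => HL.
      by exists (enum_rank_in HL t, false); rewrite /h /= enum_rankK_in.
    exists (enum_rank_in HL (p t), true); rewrite /h /= enum_rankK_in //.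
    by move: Ht; rewrite inE => /existsP[y Hy]; rewrite (ppK _ _ Hy).
  case=> [[i b]] <-; rewrite /h /=; have Li := enum_valP i.
  by case: b; [apply: (VSR_r (LM _ Li)) | apply: (VSR_l (LM _ Li))].
- move=> [i b] [j c]; rewrite /matching_rel /h /=.
  have Li := enum_valP i; have Lj := enum_valP j.
  apply/idP/idP.
    case/andP => /eqP Eij; rewrite -Eij; case: b; case: c => //= _.
      by rewrite MMD_sym; apply: LM.
    by apply: LM.
  case: b; case: c => /= Hm.
  + have := pP _ _ Hm; rewrite (ppK _ _ (LM _ Li)) => E.
    by have := pL _ Lj; rewrite -E Li.
  + have := pP _ _ Hm; rewrite (ppK _ _ (LM _ Li)) => /enum_val_inj ->; by rewrite eqxx.
  + have E := pP _ _ Hm; have : p (p (enum_val i)) = p (p (enum_val j)) by rewrite E.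
    rewrite (ppK _ _ (LM _ Li)) (ppK _ _ (LM _ Lj)) => /enum_val_inj ->; by rewrite eqxx.
  + have := pP _ _ Hm => E; by have := pL _ Li; rewrite E Lj.
Qed.


Lemma iso_sub (U : finType) (f : rel U) : iso_to (V_SR e) (MMD e) f -> contains_subgraph (V_SR e) (MMD e) f.
Proof.
case=> h [Hi Him Hf]; exists h; split => //.
  by move=> u; apply/Him; exists u.
by move=> a b; rewrite Hf.
Qed.

Lemma sub_P3 (U : finType) (f : rel U) a b c : contains_subgraph (V_SR e) (MMD e) f ->
  f a b -> f a c -> b != c -> exists a b c, [/\ MMD e a b, MMD e a c & b != c].
Proof.
case=> h [Hi _ Hf] Hab Hac Hbc; exists (h a), (h b), (h c); split; try exact: Hf.
by rewrite (inj_eq Hi).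
Qed.

Lemma sub_avoid (U : finType) (f : rel U) (u1 : U) : contains_subgraph (V_SR e) (MMD e) f ->
  (forall u0, exists a b c, [/\ f a b, f a c, b != c & u0 \notin [:: a; b; c]]) ->
  forall v, exists a b c, [/\ MMD e a b, MMD e a c, b != c & v \notin [:: a; b; c]].
Proof.
case=> h [Hi _ Hf] HA v.
case: (pickP (fun u => h u == v)) => [u0 /eqP Hu0|Hn].
  have [a [b [c [Hab Hac Hbc Hu]]]] := HA u0.
  exists (h a), (h b), (h c); split; try exact: Hf; first by rewrite (inj_eq Hi).
  by rewrite -Hu0 !inE !(inj_eq Hi); rewrite !inE in Hu.
have [a [b [c [Hab Hac Hbc Hu]]]] := HA u1.
exists (h a), (h b), (h c); split; try exact: Hf; first by rewrite (inj_eq Hi).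
by rewrite !inE !(eq_sym v) !Hn.
Qed.

Lemma iso_Inv0 (U : finType) (f : rel U) : iso_to (V_SR e) (MMD e) f ->
  (forall a b d, f a b -> f a d -> d = b) -> Inv set0 set0.
Proof.
case=> h [Hi Him Hf] Hu u v Huv.
have [a Ha] := (Him u).1 (VSR_l Huv).
have [b Hb] := (Him v).1 (VSR_r Huv).
rewrite !inE /=; apply/forallP => w; apply/implyP => Huw.
have [d Hd] := (Him w).1 (VSR_r Huw).
subst; rewrite -!Hf in Huv Huw.
by rewrite (Hu _ _ _ Huv Huw) eqxx orbT.
Qed.

Lemma iso_Inv1 (U : finType) (f : rel U) c0 : iso_to (V_SR e) (MMD e) f ->
  (forall a b d, f a b -> f a d -> a != c0 -> b != c0 -> (d == c0) || (d == b)) ->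
  exists c, Inv [set c] set0.
Proof.
case=> h [Hi Him Hf] Hu; exists (h c0) => u v Huv.
have [a Ha] := (Him u).1 (VSR_l Huv).
have [b Hb] := (Him v).1 (VSR_r Huv).
subst; rewrite !inE !(inj_eq Hi).
case: (eqVneq a c0) => //= Hac; case: (eqVneq b c0) => //= Hbc.
apply/forallP => w; apply/implyP => Huw.
have [d Hd] := (Him w).1 (VSR_r Huw); subst.
by rewrite !inE !(inj_eq Hi); apply: (Hu a) => //; rewrite Hf.
Qed.

Lemma matching_uniq x (a b d : 'I_x * bool) : matching_rel x a b -> matching_rel x a d -> d = b.
Proof.
case: a b d => [i s] [j t] [k r]; rewrite /matching_rel /= => /andP[/eqP <- Hst] /andP[/eqP <- Hsr].
by congr pair; move: Hst Hsr; case: s; case: t; case: r.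
Qed.

Lemma union_ok n (f : rel 'I_n) x (c : 'I_n) :
  (forall a b d : 'I_n, f a b -> f a d -> val a != val c -> val b != val c -> (val d == val c) || (val d == val b)) ->
  forall a b d, union_rel f (matching_rel x) a b -> union_rel f (matching_rel x) a d ->
     a != inl c -> b != inl c -> (d == inl c) || (d == b).
Proof.
move=> H [a|a] [b|b] [d|d] //= Hab Had.
  have E (u v : 'I_n) : (inl u == inl v :> 'I_n + ('I_x * bool)) = (val u == val v) by [].
  rewrite !E => Ha Hb; exact: H Hab Had Ha Hb.
by move=> _ _; rewrite (matching_uniq Hab Had) eqxx.
Qed.

Lemma partb n (f : rel 'I_n) x (c a0 b0 d0 : 'I_n) : 2 <= #|T| ->
  iso_to (V_SR e) (MMD e) (union_rel f (matching_rel x)) -> f a0 b0 -> f a0 d0 -> b0 != d0 ->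
  (forall a b d : 'I_n, f a b -> f a d -> val a != val c -> val b != val c -> (val d == val c) || (val d == val b)) ->
  O_SR e = Outcome_N.
Proof.
move=> H2 Hiso H1 H3 Hbd Hp.
have HB := breakerB (sub_P3 (a := inl a0) (b := inl b0) (c := inl d0) (iso_sub Hiso) H1 H3 Hbd).
have [c' Hc'] := iso_Inv1 Hiso (union_ok Hp).
have HM := makerM H2 Hc'.
by rewrite /O_SR HM (negbTE HB).
Qed.

Lemma partc (U : finType) (f : rel U) (u1 : U) : contains_subgraph (V_SR e) (MMD e) f ->
  (forall u0, exists a b c, [/\ f a b, f a c, b != c & u0 \notin [:: a; b; c]]) ->
  O_SR e = Outcome_B.
Proof.
move=> Hs HA; have Hv := sub_avoid u1 Hs HA.
have [h _] := Hs.
have [a [b [c [Hab Hac Hbc _]]]] := Hv (h u1).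
have HB : ~~ maker_wins_B_game e by apply: breakerB; exists a, b, c.
have HM := breakerM a Hv.
by rewrite /O_SR (negbTE HM) (negbTE HB).
Qed.

Lemma parta_l : 2 <= #|T| -> O_SR e = Outcome_M ->
     exists x, 0 < x /\ iso_to (V_SR e) (MMD e) (matching_rel x).
Proof.
move=> H2; rewrite /O_SR.
case HM: (maker_wins_M_game e); case HB: (maker_wins_B_game e) => // _.
apply: matching_iso => // a b c Hab Hac; case: (eqVneq b c) => // Hbc.
have : ~~ maker_wins_B_game e by apply: breakerB; exists a, b, c.
by rewrite HB.
Qed.

Lemma parta_r x : iso_to (V_SR e) (MMD e) (matching_rel x) -> O_SR e = Outcome_M.
Proof.
move=> Hiso; have /andP[H1 H2] := makerBoth (iso_Inv0 Hiso (@matching_uniq x)).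
by rewrite /O_SR H1 H2.
Qed.

End Dist.
Lemma fC3 : forall a b d : 'I_3, cycle_rel 3 a b -> cycle_rel 3 a d -> val a != val (@Ordinal 3 0 isT) -> val b != val (@Ordinal 3 0 isT) -> (val d == val (@Ordinal 3 0 isT)) || (val d == val b).
Proof. by do 3 case=> [[|[|[|?]]] ?] //=. Qed.
Lemma fP3 : forall a b d : 'I_3, path_rel 3 a b -> path_rel 3 a d -> val a != val (@Ordinal 3 1 isT) -> val b != val (@Ordinal 3 1 isT) -> (val d == val (@Ordinal 3 1 isT)) || (val d == val b).
Proof. by do 3 case=> [[|[|[|?]]] ?] //=. Qed.
Lemma fP4 : forall a b d : 'I_4, path_rel 4 a b -> path_rel 4 a d -> val a != val (@Ordinal 4 1 isT) -> val b != val (@Ordinal 4 1 isT) -> (val d == val (@Ordinal 4 1 isT)) || (val d == val b).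
Proof. by do 3 case=> [[|[|[|[|?]]]] ?] //=. Qed.
Lemma fP5 : forall a b d : 'I_5, path_rel 5 a b -> path_rel 5 a d -> val a != val (@Ordinal 5 2 isT) -> val b != val (@Ordinal 5 2 isT) -> (val d == val (@Ordinal 5 2 isT)) || (val d == val b).
Proof. by do 3 case=> [[|[|[|[|[|?]]]]] ?] //=. Qed.

Ltac osolve := rewrite /complete_rel /cycle_rel /path_rel ?inE -?val_eqE /= ?inordK //; lia.

Lemma avoidK n (u0 : 'I_n.+4) : exists a b c, [/\ complete_rel n.+4 a b, complete_rel n.+4 a c, b != c & u0 \notin [:: a; b; c]].
Proof.
case: u0 => [[|[|[|i]]] Hi].
- by exists (inord 1), (inord 2), (inord 3); split; osolve.
- by exists (inord 0), (inord 2), (inord 3); split; osolve.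
- by exists (inord 0), (inord 1), (inord 3); split; osolve.
- by exists (inord 0), (inord 1), (inord 2); split; osolve.
Qed.

Lemma avoidC n (u0 : 'I_n.+4) : exists a b c, [/\ cycle_rel n.+4 a b, cycle_rel n.+4 a c, b != c & u0 \notin [:: a; b; c]].
Proof.
case: u0 => [[|[|[|i]]] Hi].
- by exists (inord 2), (inord 1), (inord 3); split; osolve.
- by exists (inord (n.+3)), (inord (n.+2)), (inord 0); split; osolve.
- by exists (inord 0), (inord 1), (inord (n.+3)); split; osolve.
- by exists (inord 1), (inord 0), (inord 2); split; osolve.
Qed.

Lemma avoidP m (Hm : 4 <= m) (u0 : 'I_(m + 2)) : exists a b c, [/\ path_rel (m + 2) a b, path_rel (m + 2) a c, b != c & u0 \notin [:: a; b; c]].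
Proof.
have h0 : 0 < m + 2 by lia. have h1 : 1 < m + 2 by lia. have h2 : 2 < m + 2 by lia.
have h3 : 3 < m + 2 by lia. have h4 : 4 < m + 2 by lia. have h5 : 5 < m + 2 by lia.
case: u0 => [i Hi]; case: (leqP 3 i) => H3.
- by exists (Ordinal h1), (Ordinal h0), (Ordinal h2); split; osolve.
- by exists (Ordinal h4), (Ordinal h3), (Ordinal h5); split; osolve.
Qed.

Definition o0 := @Ordinal 3 0 isT.
Definition o1 := @Ordinal 3 1 isT.
Definition o2 := @Ordinal 3 2 isT.

Lemma ne_ord x (H : 2 <= x) (i : 'I_x) : exists k : 'I_x, k != i.
Proof.
have h0 : 0 < x by lia. have h1 : 1 < x by lia.
case: (eqVneq i (Ordinal h0)) => [->|Hi]; last by exists (Ordinal h0); rewrite eq_sym.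
by exists (Ordinal h1); rewrite -val_eqE.
Qed.

Lemma Einl (A B : eqType) (a b : A) : (inl a == inl b :> A + B) = (a == b).
Proof. by []. Qed.
Lemma Einr (A B : eqType) (a b : B) : (inr a == inr b :> A + B) = (a == b).
Proof. by []. Qed.

Lemma avoidCopies x y (H : 2 <= x + y)
  (u0 : ('I_x * 'I_3) + ('I_y * 'I_3)) : exists a b c,
  [/\ union_rel (copies_rel x (cycle_rel 3)) (copies_rel y (path_rel 3)) a b,
      union_rel (copies_rel x (cycle_rel 3)) (copies_rel y (path_rel 3)) a c,
      b != c & u0 \notin [:: a; b; c]].
Proof.
case: u0 => [[i t]|[j t]].
- case: y H => [|y'] H.
  + have H' : 2 <= x by lia.
    have [k Hk] := ne_ord H' i.
    exists (inl (k, o1)), (inl (k, o0)), (inl (k, o2)); split => //=; rewrite /copies_rel /= ?eqxx ?Einl ?xpair_eqE ?eqxx //.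
    by rewrite !inE !Einl !xpair_eqE !(eq_sym i) (negbTE Hk).
  + by exists (inr (ord0, o1)), (inr (ord0, o0)), (inr (ord0, o2)); split => //=; rewrite /copies_rel /= ?eqxx.
- case: x H => [|x'] H.
  + have H' : 2 <= y by lia.
    have [k Hk] := ne_ord H' j.
    exists (inr (k, o1)), (inr (k, o0)), (inr (k, o2)); split => //=; rewrite /copies_rel /= ?eqxx ?Einr ?xpair_eqE ?eqxx //.
    by rewrite !inE !Einr !xpair_eqE !(eq_sym j) (negbTE Hk).
  + by exists (inl (ord0, o1)), (inl (ord0, o0)), (inl (ord0, o2)); split => //=; rewrite /copies_rel /= ?eqxx.
Qed.

Theorem mainTheorem3 (T : finType) (e : rel T) :
  simple_graph e -> connected_graph e -> 2 <= #|T| ->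
  (* (a) *)
  (O_SR e = Outcome_M <->
     exists x, 0 < x /\ iso_to (V_SR e) (MMD e) (matching_rel x))
  /\
  (* (b) *)
  (forall x : nat,
     (iso_to (V_SR e) (MMD e) (union_rel (cycle_rel 3) (matching_rel x)) \/
      iso_to (V_SR e) (MMD e) (union_rel (path_rel 3) (matching_rel x)) \/
      iso_to (V_SR e) (MMD e) (union_rel (path_rel 4) (matching_rel x)) \/
      iso_to (V_SR e) (MMD e) (union_rel (path_rel 5) (matching_rel x))) ->
     O_SR e = Outcome_N)
  /\
  (* (c) *)
  (((exists m, 4 <= m /\
       (contains_subgraph (V_SR e) (MMD e) (complete_rel m) \/
        contains_subgraph (V_SR e) (MMD e) (cycle_rel m) \/
        contains_subgraph (V_SR e) (MMD e) (path_rel (m + 2)))) \/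
    (exists x y, 2 <= x + y /\
       contains_subgraph (V_SR e) (MMD e)
         (union_rel (copies_rel x (cycle_rel 3)) (copies_rel y (path_rel 3))))) ->
   O_SR e = Outcome_B).
Proof.
move=> [esym eirr] econ H2.
split; [|split].
- split; first by apply: parta_l.
  by case=> x [_ Hiso]; apply: parta_r Hiso.
- move=> x [H|[H|[H|H]]].
  + exact: (partb (c:=o0) (a0:=o1) (b0:=o0) (d0:=o2) esym econ H2 H isT isT isT fC3).
  + exact: (partb (c:=o1) (a0:=o1) (b0:=o0) (d0:=o2) esym econ H2 H isT isT isT fP3).
  + exact: (partb (c:=@Ordinal 4 1 isT) (a0:=@Ordinal 4 1 isT) (b0:=@Ordinal 4 0 isT)
      (d0:=@Ordinal 4 2 isT) esym econ H2 H isT isT isT fP4).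
  + exact: (partb (c:=@Ordinal 5 2 isT) (a0:=@Ordinal 5 1 isT) (b0:=@Ordinal 5 0 isT)
      (d0:=@Ordinal 5 2 isT) esym econ H2 H isT isT isT fP5).
- case=> [[m [Hm [H|[H|H]]]] | [x [y [Hxy H]]]].
  + have [n En] : exists n, m = n.+4 by exists (m - 4); lia.
    subst m; exact: (partc esym econ ord0 H (@avoidK n)).
  + have [n En] : exists n, m = n.+4 by exists (m - 4); lia.
    subst m; exact: (partc esym econ ord0 H (@avoidC n)).
  + have h0 : 0 < m + 2 by lia.
    exact: (partc esym econ (Ordinal h0) H (avoidP Hm)).
  + case: x Hxy H => [|x'] Hxy H.
      case: y Hxy H => [|y'] // Hxy H.
      exact: (partc esym econ (inr (ord0, o0)) H (avoidCopies Hxy)).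
    exact: (partc esym econ (inl (ord0, o0)) H (avoidCopies Hxy)).
Qed.
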